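(* Let $V$ be a finite set with positive element weights ($\vert A \vert$ = total weight of $A \subseteq V$), and let $\mathcal{P}, \mathcal{P}'$ be partitions of $V$ into nonempty parts. If an optimal $C_{\wedge}$-correspondence $(\mathcal{S}, \mathcal{S}')$ is not mutual, then $\vert \mathcal{S} \vert \in \{1, \vert \mathcal{P} \vert - 1\}$ or $\vert \mathcal{S}' \vert \in \{1, \vert \mathcal{P}' \vert - 1\}$.
   Context: For $\mathcal{S}$ a set of subsets of $V$, $U_{\mathcal{S}}$ is their union. A correspondence is a pair $(\mathcal{S}, \mathcal{S}')$ with $\mathcal{S} \subseteq \mathcal{P}$, $\mathcal{S}' \subseteq \mathcal{P}'$, with cost $\vert U_{\mathcal{S}} \triangle U_{\mathcal{S}'} \vert$. A $C_{\wedge}$-correspondence is one with $\mathcal{S} \notin \{\emptyset, \mathcal{P}\}$ and $\mathcal{S}' \notin \{\emptyset, \mathcal{P}'\}$; it is optimal if its cost is minimum among all $C_{\wedge}$-correspondences. A correspondence is mutual if (1) $\vert P \cap U_{\mathcal{S}'} \vert \ge \vert P \vert/2$ for all $P \in \mathcal{S}$, (2) $\vert P \cap U_{\mathcal{S}'} \vert \le \vert P \vert/2$ for all $P \in \mathcal{P} \setminus \mathcal{S}$, (3) $\vert P' \cap U_{\mathcal{S}} \vert \ge \vert P' \vert/2$ for all $P' \in \mathcal{S}'$, and (4) $\vert P' \cap U_{\mathcal{S}} \vert \le \vert P' \vert/2$ for all $P' \in \mathcal{P}' \setminus \mathcal{S}'$. *)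

(* Defs.v *)
From mathcomp Require Import all_boot all_order all_algebra.
Set Implicit Arguments. Unset Strict Implicit. Unset Printing Implicit Defensive.
Import Order.TTheory GRing.Theory Num.Theory.
Local Open Scope ring_scope.

Section Corr.
Variables (R : realFieldType) (V : finType) (w : V -> R).

Definition wt (A : {set V}) : R := \sum_(x in A) w x.

Definition U (S : {set {set V}}) : {set V} := cover S.

Definition cost (S S' : {set {set V}}) : R :=
  wt ((U S :\: U S') :|: (U S' :\: U S)).

Definition correspondence (P P' S S' : {set {set V}}) : Prop :=
  S \subset P /\ S' \subset P'.

Definition Cwedge_corr (P P' S S' : {set {set V}}) : Prop :=
  correspondence P P' S S' /\
  S != set0 /\ S != P /\ S' != set0 /\ S' != P'.

Definition optimal_Cwedge (P P' S S' : {set {set V}}) : Prop :=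
  Cwedge_corr P P' S S' /\
  forall T T', Cwedge_corr P P' T T' -> cost S S' <= cost T T'.

Definition mutual (P P' S S' : {set {set V}}) : Prop :=
  (forall X, X \in S -> wt X / 2 <= wt (X :&: U S')) /\
  (forall X, X \in P :\: S -> wt (X :&: U S') <= wt X / 2) /\
  (forall X, X \in S' -> wt X / 2 <= wt (X :&: U S)) /\
  (forall X, X \in P' :\: S' -> wt (X :&: U S) <= wt X / 2).
End Corr.

(* Main.v *)
Require Import Defs.
From mathcomp Require Import all_boot all_order all_algebra.
From mathcomp Require Import lra.
Import Order.TTheory GRing.Theory Num.Theory.
Local Open Scope ring_scope.
Set Implicit Arguments.

Section H.
Variables (R : realFieldType) (V : finType) (w : V -> R).

Definition symd (A B : {set V}) := (A :\: B) :|: (B :\: A).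

Lemma wtE (A : {set V}) : wt w A = \sum_x (if x \in A then w x else 0).
Proof. by rewrite /wt big_mkcond. Qed.

Lemma wt_split (X B : {set V}) : wt w X = wt w (X :&: B) + wt w (X :\: B).
Proof.
rewrite !wtE -big_split; apply: eq_bigr => x _ /=; rewrite !inE.
by case: (x \in X); case: (x \in B); rewrite ?addr0 ?add0r.
Qed.

Lemma symd_split (A X B : {set V}) : [disjoint A & X] ->
  wt w (symd (A :|: X) B) = wt w (symd A B) + wt w (X :\: B) - wt w (X :&: B).
Proof.
move=> hd; rewrite !wtE -big_split -sumrB; apply: eq_bigr => x _ /=.
rewrite /symd !inE.
case hA: (x \in A).
  rewrite (disjointFr hd hA).
  by case: (x \in B); rewrite /= ?subr0 ?addr0.
by case: (x \in X); case: (x \in B); rewrite /= ?subr0 ?addr0 ?add0r ?subrr ?sub0r ?addrK.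
Qed.

Lemma symdC (A B : {set V}) : symd A B = symd B A.
Proof. by rewrite /symd setUC. Qed.

Lemma costE (S S' : {set {set V}}) : cost w S S' = wt w (symd (U S) (U S')).
Proof. by []. Qed.

Lemma U_remove (P S : {set {set V}}) (X : {set V}) : trivIset P -> S \subset P -> X \in S ->
  U S = U (S :\ X) :|: X /\ [disjoint U (S :\ X) & X].
Proof.
move=> hT hSP hX; split.
  by rewrite /U /cover (big_setD1 _ hX) /= setUC.
rewrite disjoint_sym /U /cover; apply: bigcup_disjoint => Y; rewrite !inE => /andP [hYX hY].
move/trivIsetP: hT; apply; first exact: (subsetP hSP).
  exact: (subsetP hSP). by rewrite eq_sym.
Qed.

Lemma U_add (P S : {set {set V}}) (X : {set V}) : trivIset P -> S \subset P -> X \in P :\: S ->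
  U (X |: S) = U S :|: X /\ [disjoint U S & X].
Proof.
move=> hT hSP; rewrite inE => /andP [hXS hXP]; split.
  by rewrite /U /cover (big_setU1 _ hXS) /= setUC.
rewrite disjoint_sym /U /cover; apply: bigcup_disjoint => Y hY.
move/trivIsetP: hT; apply => //; first exact: (subsetP hSP).
by apply/negP => /eqP h; rewrite h hY in hXS.
Qed.

Lemma half_remove (P S : {set {set V}}) (X B : {set V}) : trivIset P -> S \subset P -> X \in S ->
  wt w (symd (U S) B) <= wt w (symd (U (S :\ X)) B) -> wt w X / 2 <= wt w (X :&: B).
Proof.
move=> hT hSP hX; have [-> hd] := U_remove hT hSP hX.
rewrite symd_split // (wt_split X B) => h; lra.
Qed.

Lemma half_add (P S : {set {set V}}) (X B : {set V}) : trivIset P -> S \subset P -> X \in P :\: S ->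
  wt w (symd (U S) B) <= wt w (symd (U (X |: S)) B) -> wt w (X :&: B) <= wt w X / 2.
Proof.
move=> hT hSP hX; have [-> hd] := U_add hT hSP hX.
rewrite symd_split // (wt_split X B) => h; lra.
Qed.

Lemma remove_ok (P S : {set {set V}}) (X : {set V}) : S \subset P -> S != set0 -> S != P ->
  #|S| <> 1%N -> X \in S ->
  [/\ S :\ X \subset P, S :\ X != set0 & S :\ X != P].
Proof.
move=> hSP hS0 hSP' h1 hX; have hsub : S :\ X \subset P.
  exact: subset_trans (subsetDl _ _) hSP.
have hlt : (#|S| < #|P|)%N by apply: proper_card; rewrite properEneq hSP' hSP.
split => //.
  apply/negP => /eqP h0; apply: h1; by rewrite (cardsD1 X S) hX h0 cards0.
apply/negP => /eqP hE; move: hlt; rewrite -hE (cardsD1 X S) hX.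
by rewrite ltnNge leq_addl.
Qed.

Lemma add_ok (P S : {set {set V}}) (X : {set V}) : S \subset P -> S != P ->
  #|S| <> (#|P| - 1)%N -> X \in P :\: S ->
  [/\ X |: S \subset P, X |: S != set0 & X |: S != P].
Proof.
move=> hSP hSP' h1; rewrite inE => /andP [hXS hXP].
have hlt : (#|S| < #|P|)%N by apply: proper_card; rewrite properEneq hSP' hSP.
split.
- by rewrite subUset sub1set hXP hSP.
- by apply/set0Pn; exists X; rewrite setU11.
- apply/negP => /eqP hE; apply: h1; by rewrite -hE cardsU1 hXS add1n subn1.
Qed.

End H.

Theorem proposition12 (R : realFieldType) (V : finType) (w : V -> R)
  (hw : forall x, 0 < w x)
  (P P' S S' : {set {set V}})
  (hP : partition P [set: V]) (hP' : partition P' [set: V])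
  (hopt : optimal_Cwedge w P P' S S')
  (hnm : ~ mutual w P P' S S') :
  (#|S| = 1 \/ #|S| = #|P| - 1 \/ #|S'| = 1 \/ #|S'| = #|P'| - 1)%N.
Proof.
case: (boolP [|| #|S| == 1, #|S| == #|P| - 1, #|S'| == 1 | #|S'| == #|P'| - 1]%N).
  by case/or4P => /eqP h; tauto.
rewrite !negb_or => /and4P [/eqP h1 /eqP h2 /eqP h3 /eqP h4].
exfalso; apply: hnm.
case: hopt => [[[hSP hSP'] [hS0 [hSP0 [hS'0 hSP'0]]]] hmin].
case/and3P: hP => _ hT _; case/and3P: hP' => _ hT' _.
split; [|split; [|split]].
- move=> X hX; have [a b c] := remove_ok hSP hS0 hSP0 h1 hX.
  apply: (@half_remove _ _ w _ _ _ _ hT hSP hX); rewrite -!costE; apply: hmin.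
  by split; [split|].
- move=> X hX; have [a b c] := add_ok hSP hSP0 h2 hX.
  apply: (@half_add _ _ w _ _ _ _ hT hSP hX); rewrite -!costE; apply: hmin.
  by split; [split|].
- move=> X hX; have [a b c] := remove_ok hSP' hS'0 hSP'0 h3 hX.
  apply: (@half_remove _ _ w _ _ _ _ hT' hSP' hX); rewrite (symdC (U S')) (symdC (U (S' :\ X))) -!costE; apply: hmin.
  by split; [split|].
- move=> X hX; have [a b c] := add_ok hSP' hSP'0 h4 hX.
  apply: (@half_add _ _ w _ _ _ _ hT' hSP' hX); rewrite (symdC (U S')) (symdC (U (X |: S'))) -!costE; apply: hmin.
  by split; [split|].
Qed.
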